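(* Let $n\ge 2$ be an integer and let $\mathbb{K}$ be a field such that $\operatorname{char}\mathbb{K}$ is either $0$ or coprime to both $n$ and $n-1$. Let $A_n=\mathbb{K}[x,y]/I_n$, where $I_n=(y^{2n+3},\; x^ny^2-y^{n+2},\; x^{2n+1}-xy^{n+1})$, and let $\mathfrak{m}_n$ be the ideal of $A_n$ generated by (the images of) $x,y$. Then the one-dimensional subspace $\langle y^{2n+1}\rangle\subseteq\mathfrak{m}_n$ is invariant under the automorphism group $\operatorname{Aut}(A_n)$ of the $\mathbb{K}$-algebra $A_n$. More precisely, for every $a\in\operatorname{Aut}(A_n)$ there is a scalar $\gamma_a\in\mathbb{K}$ with $a(y^{2n+1})=\gamma_a y^{2n+1}$, and $\gamma_a^{(n-1)/3}=1$ if $n\equiv 1 \pmod 3$, while $\gamma_a^{\,n-1}=1$ otherwise.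
   Context: All algebras are associative, commutative, with unity; $\operatorname{Aut}(A_n)$ denotes the group of unital $\mathbb{K}$-algebra automorphisms of $A_n$. Monomials such as $y^{2n+1}$ are regarded as elements of $A_n$ via the quotient map. (The paper shows $A_n$ is a finite-dimensional local algebra with maximal ideal $\mathfrak{m}_n$.) *)

(* Defs.v *)
From HB Require Import structures.
From mathcomp Require Import all_boot all_order all_algebra.
From mathcomp Require Import mpoly.
Set Implicit Arguments. Unset Strict Implicit. Unset Printing Implicit Defensive.
Import Order.TTheory GRing.Theory.
Local Open Scope ring_scope.

Section An.
Variable K : fieldType.

Definition px : {mpoly K[2]} := 'X_(@ord0 1).
Definition py : {mpoly K[2]} := 'X_(@ord_max 1).

Definition gen1 (n : nat) : {mpoly K[2]} := py ^+ (2 * n + 3).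
Definition gen2 (n : nat) : {mpoly K[2]} := px ^+ n * py ^+ 2 - py ^+ (n + 2).
Definition gen3 (n : nat) : {mpoly K[2]} :=
  px ^+ (2 * n + 1) - px * py ^+ (n + 1).

Definition in_In (n : nat) (p : {mpoly K[2]}) : Prop :=
  exists c1 c2 c3 : {mpoly K[2]}, p = c1 * gen1 n + c2 * gen2 n + c3 * gen3 n.

Definition evalXY (A : comAlgType K) (X Y : A) (p : {mpoly K[2]}) : A :=
  mmap (in_alg A) (fun i : 'I_2 => if i == ord0 then X else Y) p.

(* (A, X, Y) is a presentation of A_n = K[x,y]/I_n : the evaluation map
   K[x,y] -> A, x |-> X, y |-> Y, is surjective with kernel exactly I_n.
   Equivalently, A is the K-algebra A_n with X, Y the images of x, y. *)
Definition presents_An (n : nat) (A : comAlgType K) (X Y : A) : Prop :=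
  (forall a : A, exists p : {mpoly K[2]}, a = evalXY X Y p) /\
  (forall p : {mpoly K[2]}, evalXY X Y p = 0 <-> in_In n p).

End An.

(* Main.v *)
Require Import Defs.
From HB Require Import structures.
From mathcomp Require Import all_boot all_order all_algebra.
From mathcomp Require Import mpoly.
From mathcomp Require Import zify ring.
Import Order.TTheory GRing.Theory.
Local Open Scope ring_scope.


Lemma mul0_cancel (K : fieldType) (x y : K) : x != 0 -> x * y = 0 -> y = 0.
Proof. by move=> hx h; apply: (mulfI hx); rewrite h mulr0. Qed.

Lemma scal_core (K : fieldType) m (P T a b wy vy : K) :
  (m%:R : K) != 0 -> (m.+1)%:R != 0 :> K -> T != 0 -> (b == 0 -> T == 0) ->
  a * P * T ^+ 2 = b * T ^+ 3 ->
  a ^+ 2 * P ^+ 3 = b * T ^+ 2 * P ->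
  a * P * (vy * T *+ 2) + wy * a *+ m.+1 * T ^+ 2 = vy * (b * T ^+ 2) *+ (m.+3) ->
  wy * (a ^+ 2 * P ^+ 2) *+ (2 * m + 3) = b * T ^+ 2 * wy + vy * (b * T) *+ (m.+2) * P ->
  b = 1 /\ vy = 0.
Proof.
move=> hm hm1 hT hb E1 E2 E3 E4.
have T2 : T ^+ 2 != 0 by rewrite expf_neq0.
have bn : b != 0 by apply/negP => /hb; rewrite (negbTE hT).
have e1 : a * P = b * T.
  by apply: (mulIf T2); rewrite E1; ring.
have hP : P != 0.
  apply/negP => /eqP P0; move: e1; rewrite P0 mulr0 => /esym/eqP.
  by rewrite mulf_eq0 (negbTE bn) (negbTE hT).
have e2 : (a * P) ^+ 2 = b * T ^+ 2.
  by apply: (mulIf hP); rewrite -E2; ring.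
have b1 : b = 1.
  have : b * T ^+ 2 * (b - 1) = 0.
    have -> : b * T ^+ 2 * (b - 1) = (b * T) ^+ 2 - b * T ^+ 2 by ring.
    by rewrite -e1 e2 subrr.
  move/(mul0_cancel _); rewrite mulf_neq0 // => /(_ isT) /eqP; rewrite subr_eq0 => /eqP //.
subst b; split => //.
have ea : wy * a = vy.
  have : (m.+1)%:R * T ^+ 2 * (wy * a - vy) = 0.
    move: E3; rewrite e1 => E3.
    have -> : (m.+1)%:R * T ^+ 2 * (wy * a - vy) =
      (1 * T * (vy * T *+ 2) + wy * a *+ m.+1 * T ^+ 2) - vy * (1 * T ^+ 2) *+ m.+3.
      by ring.
    by rewrite E3 subrr.
  move/(mul0_cancel _); rewrite mulf_neq0 // => /(_ isT) /eqP; rewrite subr_eq0 => /eqP //.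
have e2' : a ^+ 2 * P ^+ 2 = T ^+ 2 by rewrite -exprMn e2 mul1r.
rewrite e2' !mul1r in E4.
have e1' : a * P = T by rewrite e1 mul1r.
have : (m%:R * T ^+ 2) * vy = 0.
  have -> : (m%:R * T ^+ 2) * vy =
     a * (wy * T ^+ 2 *+ (2 * m + 3) - (T ^+ 2 * wy + vy * T *+ m.+2 * P))
     + (2 * m + 2)%:R * T ^+ 2 * (vy - wy * a) + vy * T * (m.+2)%:R * (a * P - T).
    ring.
  by rewrite E4 subrr mulr0 add0r ea subrr mulr0 add0r e1' subrr mulr0.
move/(mul0_cancel _); rewrite mulf_neq0 // => /(_ isT) //.
Qed.

Lemma scal_final (K : fieldType) n (P T wy vy : K) :
  (2 <= n)%N -> n%:R != 0 :> K -> (n-1)%:R != 0 :> K -> T != 0 ->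
  P ^+ n * T ^+ 2 = T ^+ (n+2) ->
  P ^+ (2*n+1) = T ^+ (n+1) * P ->
  P ^+ n * (vy * T ^+ 2.-1 *+ 2) + wy * P ^+ n.-1 *+ n * T ^+ 2 = vy * T ^+ (n + 2).-1 *+ (n + 2) ->
  wy * P ^+ (2 * n + 1).-1 *+ (2 * n + 1) = T ^+ (n + 1) * wy + vy * T ^+ (n + 1).-1 *+ (n + 1) * P ->
  T ^+ (n-1) = 1 /\ vy = 0.
Proof.
case: n => [//|m] n2 hn hn1 hT E1 E2 E3 E4.
have em : (m.+1 - 1 = m)%N by lia.
rewrite em in hn1 *.
have x1 : P ^+ m.+1 = P ^+ m * P by rewrite exprSr.
have x2 : T ^+ (m.+1 + 2) = T ^+ m * T ^+ 3 by rewrite -exprD; congr (_ ^+ _); lia.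
have x3 : P ^+ (2 * m.+1 + 1) = (P ^+ m) ^+ 2 * P ^+ 3 by rewrite -exprM -exprD; congr (_ ^+ _); lia.
have x4 : T ^+ (m.+1 + 1) = T ^+ m * T ^+ 2 by rewrite -exprD; congr (_ ^+ _); lia.
have x5 : T ^+ (m.+1 + 2).-1 = T ^+ m * T ^+ 2 by rewrite -exprD; congr (_ ^+ _); lia.
have x6 : P ^+ (2 * m.+1 + 1).-1 = (P ^+ m) ^+ 2 * P ^+ 2 by rewrite -exprM -exprD; congr (_ ^+ _); lia.
have x7 : T ^+ (m.+1 + 1).-1 = T ^+ m * T by rewrite -exprSr; congr (_ ^+ _); lia.
have n1 : (m.+1 + 2 = m.+3)%N by lia.
have n2' : (2 * m.+1 + 1 = 2 * m + 3)%N by lia.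
have n3 : (m.+1 + 1 = m.+2)%N by lia.
rewrite x1 x2 in E1.
rewrite x3 x4 in E2.
rewrite x1 x5 /= expr1 n1 in E3.
rewrite x6 x4 x7 n2' n3 in E4.
apply: (@scal_core K m P T (P ^+ m) (T ^+ m) wy vy hn1 hn hT _ E1 E2 E3 E4).
by rewrite expf_eq0 => /andP [].
Qed.

Section Core.
Variable K : fieldType.
Variable n : nat.
Hypothesis n2 : (2 <= n)%N.
Variable A : comAlgType K.
Variables X Y : A.
Hypothesis R1 : Y ^+ (2*n+3) = 0.
Hypothesis R2 : X ^+ n * Y ^+ 2 = Y ^+ (n+2).
Hypothesis R3 : X ^+ (2*n+1) = X * Y ^+ (n+1).

Definition Mo i j := X ^+ i * Y ^+ j.
Arguments Mo (i j)%_nat_scope.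

Lemma Mo_mul i j k l : Mo i j * Mo k l = Mo (i+k) (j+l).
Proof. rewrite /Mo !exprD; ring. Qed.
Lemma Mo_eq i j k l : i = k -> j = l -> Mo i j = Mo k l.
Proof. by move=> -> ->. Qed.
Lemma MoR1 i j : Mo i (2*n+3+j) = 0.
Proof. by rewrite /Mo exprD R1 mul0r mulr0. Qed.
Lemma MoR2 i j : Mo (n+i) (2+j) = Mo i (n+2+j).
Proof. rewrite /Mo [X ^+ (n+i)]exprD [Y ^+ (2+j)]exprD [Y ^+ (n+2+j)]exprD -R2. ring. Qed.
Lemma MoR3 i j : Mo (2*n+1+i) j = Mo (1+i) (n+1+j).
Proof. rewrite /Mo [X ^+ (2*n+1+i)]exprD [X ^+ (1+i)]exprD [Y ^+ (n+1+j)]exprD R3 expr1. ring. Qed.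
Lemma Mo00 : Mo 0 0 = 1. Proof. by rewrite /Mo !expr0 mulr1. Qed.
Lemma MoX : X = Mo 1 0. Proof. by rewrite /Mo expr1 expr0 mulr1. Qed.
Lemma MoY : Y = Mo 0 1. Proof. by rewrite /Mo expr1 expr0 mul1r. Qed.

Definition stair i j := (2*n+3 <= j)%N \/ ((1 <= i)%N /\ (n+3 <= j)%N) \/
  ((n+1 <= i)%N /\ (3 <= j)%N) \/ ((2*n+1 <= i)%N /\ (2 <= j)%N) \/ (3*n+1 <= i)%N.

Lemma mulMoX i j : Mo i j * X = Mo (i+1) j.
Proof. by rewrite /Mo exprD expr1; ring. Qed.
Lemma mulMoY i j : Mo i j * Y = Mo i (j+1).
Proof. by rewrite /Mo [Y ^+ (j+1)]exprD expr1; ring. Qed.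

Lemma M20 : Mo 2 0 = X * X. Proof. by rewrite /Mo expr2 expr0 mulr1. Qed.
Lemma M02 : Mo 0 2 = Y * Y. Proof. by rewrite /Mo expr2 expr0 mul1r. Qed.
Lemma M30 : Mo 3 0 = X * X * X. Proof. by rewrite /Mo !exprS expr0 mulr1 mulr1 mulrA. Qed.

Lemma Z2 : Mo 1 (n+3) = 0.
Proof.
have step : Mo 1 (n+3) = Mo 1 (n+3) * Mo 0 (n-1).
  transitivity (Mo (2*n+1+0) 2); first by rewrite MoR3; apply: Mo_eq; lia.
  transitivity (Mo (n + (n+1)) (2+0)); first by apply: Mo_eq; lia.
  rewrite MoR2.
  transitivity (Mo (n+1) (2+n)); first by apply: Mo_eq; lia.
  rewrite MoR2 Mo_mul; apply: Mo_eq; lia.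
have it : forall k, Mo 1 (n+3) = Mo 1 (n+3) * Mo 0 ((n-1)*k).
  elim=> [|k IH]; first by rewrite muln0 Mo00 mulr1.
  rewrite mulnS; transitivity (Mo 1 (n+3) * Mo 0 ((n-1)*k)); first exact: IH.
  by rewrite {1}step -mulrA Mo_mul.
rewrite (it 2) Mo_mul.
rewrite (@Mo_eq _ _ (1+0)%N (2*n+3 + (n-2))%N) ?MoR1 //; lia.
Qed.

Lemma Mo_split i j a b : (a <= i)%N -> (b <= j)%N -> Mo i j = Mo a b * Mo (i-a) (j-b).
Proof. move=> ha hb; rewrite Mo_mul; apply: Mo_eq; lia. Qed.

Lemma Z3 : Mo (n+1) 3 = 0.
Proof.
transitivity (Mo (n+1) (2+1)) => //; rewrite MoR2.
have e : Mo 1 (n+2+1) = Mo 1 (n+3) by apply: Mo_eq; lia.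
by rewrite e Z2.
Qed.
Lemma Z4 : Mo (2*n+1) 2 = 0.
Proof.
transitivity (Mo (2*n+1+0) 2); first by rewrite addn0.
have e : Mo (1+0) (n+1+2) = Mo 1 (n+3) by apply: Mo_eq; lia.
by rewrite MoR3 e Z2.
Qed.
Lemma Z5 : Mo (3*n+1) 0 = 0.
Proof.
transitivity (Mo (2*n+1+n) 0); first by apply: Mo_eq; lia.
rewrite MoR3 (@Mo_split _ _ (n+1)%N 3%N) ?Z3 ?mul0r //; lia.
Qed.

Lemma stair_eq {i j i' j'} : stair i j -> i = i' -> j = j' -> stair i' j'.
Proof. by move=> h <- <-. Qed.

Lemma stairP i j : stair i j -> Mo i j = 0.
Proof.
case=> [h|[[h1 h2]|[[h1 h2]|[[h1 h2]|h]]]].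
- have -> : Mo i j = Mo i (2*n+3 + (j - (2*n+3))) by apply: Mo_eq; lia.
  exact: MoR1.
- by rewrite (@Mo_split i j 1%N (n+3)%N) // Z2 mul0r.
- by rewrite (@Mo_split i j (n+1)%N 3%N) // Z3 mul0r.
- by rewrite (@Mo_split i j (2*n+1)%N 2%N) // Z4 mul0r.
- by rewrite (@Mo_split i j (3*n+1)%N 0%N) // Z5 mul0r.
Qed.

Lemma stairP' i j i' j' : stair i' j' -> i = i' -> j = j' -> Mo i j = 0.
Proof. by move=> h -> ->; apply: stairP. Qed.

Definition S0 := Mo 0 (2*n+2).
Definition Q := Mo 0 (2*n+1).

Lemma soc1 : Mo n (n+2) = S0.
Proof.
rewrite /S0; transitivity (Mo (n+0) (2+n)); first by apply: Mo_eq; lia.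
by rewrite MoR2; apply: Mo_eq; lia.
Qed.
Lemma soc2 : Mo (3*n) 1 = S0.
Proof.
transitivity (Mo (2*n+1+(n-1)) 1); first by apply: Mo_eq; lia.
by rewrite MoR3 -soc1; apply: Mo_eq; lia.
Qed.
Lemma Qsoc1 : Mo n (n+1) = Q.
Proof.
rewrite /Q; transitivity (Mo (n+0) (2+(n-1))); first by apply: Mo_eq; lia.
by rewrite MoR2; apply: Mo_eq; lia.
Qed.
Lemma Qsoc2 : Mo (3*n) 0 = Q.
Proof.
transitivity (Mo (2*n+1+(n-1)) 0); first by apply: Mo_eq; lia.
by rewrite MoR3 -Qsoc1; apply: Mo_eq; lia.
Qed.

Definition cst (z : A) (c : K) := exists a b, z = c%:A + X * a + Y * b.

Lemma killsP {P c z} : P * X = 0 -> P * Y = 0 -> cst z c -> P * z = c *: P.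
Proof.
move=> hx hy [a [b ->]].
by rewrite !mulrDr !mulrA hx hy !mul0r !addr0 mulr_algr.
Qed.

Lemma algM (c d : K) : (c * d)%:A = c%:A * d%:A :> A.
Proof. by rewrite -scalerAl mul1r scalerA. Qed.

Lemma cst_mul {z c z' c'} : cst z c -> cst z' c' -> cst (z * z') (c * c').
Proof.
move=> [a [b ->]] [a' [b' ->]].
exists (c%:A * a' + a * (c'%:A + X * a' + Y * b')).
exists (c%:A * b' + b * (c'%:A + X * a' + Y * b')).
rewrite algM; ring.
Qed.
Lemma cst1 : cst 1 1.
Proof. by exists 0, 0; rewrite !mulr0 !addr0 scale1r. Qed.
Lemma cst_exp {z c} k : cst z c -> cst (z ^+ k) (c ^+ k).
Proof.
move=> h; elim: k => [|k IH]; first by rewrite !expr0; exact: cst1.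
by rewrite !exprS; apply: cst_mul.
Qed.
Lemma cst_muln {z c} k : cst z c -> cst (z *+ k) (c *+ k).
Proof.
move=> [a [b ->]]; exists (a *+ k), (b *+ k).
by rewrite !mulrnDl -!mulrnAr scalerMnl.
Qed.
Lemma cst_add {z c z' c'} : cst z c -> cst z' c' -> cst (z + z') (c + c').
Proof.
move=> [a [b ->]] [a' [b' ->]]; exists (a + a'), (b + b').
rewrite scalerDl; ring.
Qed.

Lemma S0X : S0 * X = 0.
Proof. by rewrite MoX /S0 Mo_mul; apply: (@stairP' _ _ 1%N (2*n+2)%N); rewrite /stair; lia. Qed.
Lemma S0Y : S0 * Y = 0.
Proof. by rewrite MoY /S0 Mo_mul; apply: (@stairP' _ _ 0%N (2*n+3)%N); rewrite /stair; lia. Qed.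
Lemma QX : Q * X = 0.
Proof. by rewrite MoX /Q Mo_mul; apply: (@stairP' _ _ 1%N (2*n+1)%N); rewrite /stair; lia. Qed.
Lemma QY : Q * Y = S0.
Proof. by rewrite MoY /Q Mo_mul /S0; apply: Mo_eq; lia. Qed.

Lemma S0cst {z c} : cst z c -> S0 * z = c *: S0.
Proof. apply: killsP; [exact: S0X | exact: S0Y]. Qed.

Definition jet z c d := Q * z = c *: Q + d *: S0 /\ S0 * z = c *: S0.

Hypothesis decomp : forall z : A, exists c, cst z c.

Lemma jet_of {z c} : cst z c -> exists d, jet z c d.
Proof.
move=> hz; have [a [b ez]] := hz.
have [d hd] := decomp b.
exists d; split; last exact: S0cst.
by rewrite ez !mulrDr !mulrA QX QY mul0r addr0 mulr_algr (S0cst hd).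
Qed.

Lemma jet_mul z c d z' c' d' : jet z c d -> jet z' c' d' ->
  jet (z * z') (c * c') (c * d' + d * c').
Proof.
move=> [h1 h2] [h3 h4]; split.
  by rewrite mulrA h1 mulrDl -!scalerAl h3 h4 scalerDr !scalerA scalerDl addrA.
by rewrite mulrA h2 -scalerAl h4 scalerA.
Qed.

Arguments jet_mul {z c d z' c' d'}.
Lemma jet1 : jet 1 1 0.
Proof. by split; rewrite mulr1 ?scale1r // scale0r addr0. Qed.

Lemma jet_exp {z c d} k : jet z c d -> jet (z ^+ k) (c ^+ k) (d * c ^+ k.-1 *+ k).
Proof.
move=> h; elim: k => [|k IH]; first by rewrite !expr0 mulr0n; exact: jet1.
rewrite !exprS; have := jet_mul h IH.
congr jet; case: k {IH} => [|k] /=; first by rewrite mulr0n mulr0 add0r expr0 mulr1.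
by rewrite exprS; ring.
Qed.

Fixpoint Fk (k : nat) (z : A) : Prop :=
  if k is k'.+1 then exists u v, Fk k' u /\ Fk k' v /\ z = X * u + Y * v else True.

Lemma Fk_mulr k z w : Fk k z -> Fk k (z * w).
Proof.
elim: k z => // k IH z [u [v [hu [hv ->]]]].
exists (u * w), (v * w); do !split; try exact: IH.
by rewrite mulrDl !mulrA.
Qed.

Lemma Fk_mul a b z w : Fk a z -> Fk b w -> Fk (a + b) (z * w).
Proof.
elim: a z => [|a IH] z hz hw; first by rewrite add0n mulrC; exact: Fk_mulr.
case: hz => [u [v [hu [hv ->]]]]; rewrite addSn.
exists (u * w), (v * w); do !split; try exact: IH.
by rewrite mulrDl !mulrA.
Qed.

Lemma Fk_exp a k z : Fk a z -> Fk (a * k) (z ^+ k).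
Proof.
move=> h; elim: k => [|k IH]; first by rewrite muln0.
by rewrite exprS mulnS; apply: Fk_mul.
Qed.

Lemma Fk_kill k z i j : Fk k z -> (forall a, (a <= k)%N -> stair (i + a) (j + k - a)) ->
  Mo i j * z = 0.
Proof.
elim: k z i j => [|k IH] z i j hz hst.
  by rewrite (@stairP' i j (i + 0)%N (j + 0 - 0)%N) ?mul0r //; [exact: hst | lia | lia].
case: hz => [u [v [hu [hv ->]]]].
rewrite mulrDr !mulrA mulMoX mulMoY.
rewrite (IH u) ?(IH v) ?addr0 //.
  by move=> a ha; refine (stair_eq (hst a (leqW ha)) _ _); lia.
by move=> a ha; refine (stair_eq (hst a.+1 ha) _ _); lia.
Qed.

Lemma Fk_zero k z : Fk k z -> (3*n+2 <= k)%N -> z = 0.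
Proof.
move=> hz hk; have := @Fk_kill k z 0 0 hz.
rewrite Mo00 mul1r; apply=> a ha; rewrite /stair; lia.
Qed.

Lemma Mo_exp a b e : Mo a b ^+ e = Mo (a * e) (b * e).
Proof. by rewrite /Mo exprMn -!exprM. Qed.

Lemma probe_term al be a1 b1 a2 b2 m k (s t r : A) :
  Mo al be * ((Mo a1 b1 * s) ^+ (m - k) * (Mo a2 b2 * t) ^+ k *+ 'C(m, k)) * r
  = Mo (al + a1 * (m - k) + a2 * k) (be + b1 * (m - k) + b2 * k)
      * (s ^+ (m - k) * t ^+ k * r) *+ 'C(m, k).
Proof.
rewrite [(Mo a1 b1 * s) ^+ _]exprMn [(Mo a2 b2 * t) ^+ _]exprMn !Mo_exp -!Mo_mul; ring.
Qed.

Lemma probe_zero al be a1 b1 a2 b2 m (s t r : A) :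
  (forall k, (k <= m)%N -> stair (al + a1 * (m - k) + a2 * k) (be + b1 * (m - k) + b2 * k)) ->
  Mo al be * (Mo a1 b1 * s + Mo a2 b2 * t) ^+ m * r = 0.
Proof.
move=> h; rewrite exprDn mulr_sumr mulr_suml big1 // => [[k hk]] _ /=.
by rewrite probe_term stairP ?mul0r ?mul0rn //; apply: h.
Qed.

Lemma probe_one al be a1 b1 a2 b2 m (s t r : A) :
  (forall k, (1 <= k <= m)%N -> stair (al + a1 * (m - k) + a2 * k) (be + b1 * (m - k) + b2 * k)) ->
  Mo al be * (Mo a1 b1 * s + Mo a2 b2 * t) ^+ m * r = Mo (al + a1 * m) (be + b1 * m) * (s ^+ m * r).
Proof.
move=> h; rewrite exprDn mulr_sumr mulr_suml big_ord_recl /= big1 ?addr0.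
  by rewrite probe_term subn0 !muln0 !addn0 expr0 mulr1 bin0 mulr1n.
move=> [k hk] _; rewrite /= probe_term.
rewrite stairP ?mul0r ?mul0rn //; apply: h; rewrite /bump /=; lia.
Qed.

Lemma distr2 al be a b c d (s t G : A) :
  Mo al be * ((Mo a b * s + Mo c d * t) * G) = Mo (al + a) (be + b) * G * s + Mo (al + c) (be + d) * G * t.
Proof. rewrite -[Mo (al + a) _]Mo_mul -[Mo (al + c) _]Mo_mul; ring. Qed.

Lemma distr3 al be a b c d e h (s t u G : A) :
  Mo al be * (G * (Mo a b * s + Mo c d * t + Mo e h * u)) =
  Mo (al + a) (be + b) * G * s + Mo (al + c) (be + d) * G * t + Mo (al + e) (be + h) * G * u.
Proof. rewrite -[Mo (al + a) _]Mo_mul -[Mo (al + c) _]Mo_mul -[Mo (al + e) _]Mo_mul; ring. Qed.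

Lemma sq2 a b c d (s t : A) :
  (Mo a b * s + Mo c d * t) ^+ 2 = Mo (a * 2) (b * 2) * s ^+ 2 + Mo (a + c) (b + d) * (s * t *+ 2) + Mo (c * 2) (d * 2) * t ^+ 2.
Proof. rewrite -!Mo_exp -Mo_mul; ring. Qed.

Lemma scalS0 {c : K} : S0 != 0 -> c *: S0 = 0 -> c = 0.
Proof. by move=> hS /eqP; rewrite scaler_eq0 (negbTE hS) orbF => /eqP. Qed.


Lemma probe_oneE al be a1 b1 a2 b2 m (s t r : A) i0 j0 :
  (forall k, (1 <= k <= m)%N -> stair (al + a1 * (m - k) + a2 * k) (be + b1 * (m - k) + b2 * k)) ->
  i0 = (al + a1 * m)%N -> j0 = (be + b1 * m)%N ->
  Mo al be * (Mo a1 b1 * s + Mo a2 b2 * t) ^+ m * r = Mo i0 j0 * (s ^+ m * r).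
Proof. by move=> h -> ->; apply: probe_one. Qed.

Lemma probe_oneE1 al be a1 b1 a2 b2 m (s t : A) i0 j0 :
  (forall k, (1 <= k <= m)%N -> stair (al + a1 * (m - k) + a2 * k) (be + b1 * (m - k) + b2 * k)) ->
  i0 = (al + a1 * m)%N -> j0 = (be + b1 * m)%N ->
  Mo al be * (Mo a1 b1 * s + Mo a2 b2 * t) ^+ m = Mo i0 j0 * s ^+ m.
Proof.
by move=> h e1 e2; rewrite -[LHS]mulr1 (@probe_oneE al be a1 b1 a2 b2 m s t 1 i0 j0 h e1 e2) mulr1.
Qed.

Lemma probe_zero1 al be a1 b1 a2 b2 m (s t : A) :
  (forall k, (k <= m)%N -> stair (al + a1 * (m - k) + a2 * k) (be + b1 * (m - k) + b2 * k)) ->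
  Mo al be * (Mo a1 b1 * s + Mo a2 b2 * t) ^+ m = 0.
Proof. by move=> h; rewrite -[LHS]mulr1 (@probe_zero al be a1 b1 a2 b2 m s t 1 h). Qed.

Lemma XY_Mo (a b : A) : X * a + Y * b = Mo 1 0 * a + Mo 0 1 * b.
Proof. by rewrite /Mo !expr1 !expr0 mulr1 mul1r. Qed.

Variables f g : A.
Hypothesis Hg : g ^+ (2*n+3) = 0.
Hypothesis H2 : f ^+ n * g ^+ 2 = g ^+ (n+2).
Hypothesis H3 : f ^+ (2*n+1) = f * g ^+ (n+1).
Hypothesis Hgnz : g ^+ (2*n+2) != 0.
Hypothesis S0nz : S0 != 0.
Hypothesis hn : (n%:R : K) != 0.
Hypothesis hn1 : ((n-1)%:R : K) != 0.
Hypothesis h2 : (2%:R : K) != 0.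

Ltac solve_side := first [ move=> ? ?; rewrite /stair; lia | lia ].

Lemma cst0 {z} : cst z 0 -> exists a b, z = Mo 1 0 * a + Mo 0 1 * b.
Proof. by move=> [a [b ->]]; exists a, b; rewrite scale0r add0r XY_Mo. Qed.

Lemma scal_eq (c d : K) : c *: S0 = d *: S0 -> c = d.
Proof. by move=> e; apply/eqP; rewrite -subr_eq0; apply/eqP/(scalS0 S0nz); rewrite scalerBl e subrr. Qed.

Lemma main_core : exists t : K, t ^+ (n-1) = 1 /\ g ^+ (2*n+1) = t ^+ (2*n+1) *: Y ^+ (2*n+1).
Proof.
have [cg hcg] := decomp g.
have cg0 : cg = 0.
  have := S0cst (cst_exp (2*n+3) hcg); rewrite Hg mulr0 => /esym /(scalS0 S0nz) /eqP.
  by rewrite expf_eq0 => /andP [_ /eqP].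
have [cf hcf] := decomp f.
have cf0 : cf = 0.
  have e := congr1 (fun z => S0 * z) H3; move: e => /=.
  have z0 : (0 : K) ^+ (n+1) = 0 by rewrite addn1 exprS mul0r.
  rewrite (S0cst (cst_exp _ hcf)) (S0cst (cst_mul hcf (cst_exp _ hcg))) cg0 z0 mulr0 scale0r.
  by move/(scalS0 S0nz)/eqP; rewrite expf_eq0 => /andP [_ /eqP].
subst cg cf.
have [f1 [f2 ef]] := cst0 hcf.
have [g1 [g2 eg]] := cst0 hcg.
have [p0 hp0] := decomp f1.
have [q0 hq0] := decomp f2.
have [s0 hs0] := decomp g1.
have [t0 ht0] := decomp g2.
have P0a : Mo (2*n-2) 1 * f ^+ (2*n+1) = 0.
  by rewrite ef; apply: probe_zero1 => k hk; rewrite /stair; lia.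
have P0b : Mo (2*n-2) 1 * (f * g ^+ (n+1)) = (s0 ^+ (n+1) * p0) *: S0.
  rewrite {1}ef distr2 eg.
  rewrite (@probe_oneE _ _ _ _ _ _ _ _ _ _ (3*n) 1); try solve_side.
  rewrite probe_zero; try solve_side.
  by rewrite addr0 soc2 (S0cst (cst_mul (cst_exp _ hs0) hp0)).
have P0c : Mo (2*n-2) 1 * g ^+ (n+2) = s0 ^+ (n+2) *: S0.
  rewrite eg (@probe_oneE1 _ _ _ _ _ _ _ _ _ (3*n) 1); try solve_side.
  by rewrite soc2 (S0cst (cst_exp _ hs0)).
have P0d : Mo (2*n-2) 1 * (f ^+ n * g ^+ 2) = (p0 ^+ n * s0 ^+ 2) *: S0.
  rewrite eg sq2 distr3 ef.
  rewrite (@probe_oneE _ _ _ _ _ _ _ _ _ _ (3*n) 1); try solve_side.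
  rewrite probe_zero; try solve_side.
  rewrite probe_zero; try solve_side.
  by rewrite !addr0 soc2 (S0cst (cst_mul (cst_exp _ hp0) (cst_exp _ hs0))).
have s00 : s0 = 0.
  have e1 : s0 ^+ (n+1) * p0 = 0.
    by apply/(scalS0 S0nz); rewrite -P0b -H3 P0a.
  have e2 : p0 ^+ n * s0 ^+ 2 = s0 ^+ (n+2).
    by apply: scal_eq; rewrite -P0c -P0d H2.
  have [//|hs] := eqVneq s0 0.
  exfalso; move/eqP: e1; rewrite mulf_eq0 expf_eq0 (negbTE hs) andbF /= => /eqP hp.
  have z0 : (0 : K) ^+ n = 0 by rewrite -(subnK (ltnW n2)) exprD expr1 mulr0.
  move: e2; rewrite hp z0 mul0r => /esym /eqP; rewrite expf_eq0 (negbTE hs) andbF //.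
subst s0.
have [ga [gb eg1]] := cst0 hs0.
have t0n : t0 != 0.
  apply/negP => /eqP t00; subst t0.
  have F1 : forall z, cst z 0 -> Fk 1 z.
    by move=> z [a [b ->]]; exists a, b; rewrite scale0r add0r.
  have Fg : Fk 2 g.
    exists g1, g2; split; first exact: F1.
    split; first exact: F1.
    by rewrite eg -MoX -MoY.
  have h0 := @Fk_zero _ _ (@Fk_exp 2 (2*n+2) g Fg).
  have : g ^+ (2*n+2) = 0 by apply: h0; lia.
  by move/eqP; rewrite (negbTE Hgnz).
have cstX z : cst (Mo 1 0 * z) 0.
  by exists z, 0; rewrite scale0r add0r mulr0 addr0 -MoX.
set v := Mo 1 0 * gb + g2.
have hv : cst v t0 by rewrite /v -[t0]add0r; apply: cst_add.
have eg2 : g = Mo 0 1 * v + Mo 2 0 * ga.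
  by rewrite eg eg1 /v M20 -MoX -MoY; ring.
have Pqa : Mo 0 n * f ^+ (2*n+1) = 0.
  by rewrite ef; apply: probe_zero1 => k hk; rewrite /stair; lia.
have Pqb : Mo 0 n * (f * g ^+ (n+1)) = (t0 ^+ (n+1) * q0) *: S0.
  rewrite {1}ef distr2 eg2.
  rewrite probe_zero; try solve_side.
  rewrite (@probe_oneE _ _ _ _ _ _ _ _ _ _ 0 (2*n+2)); try solve_side.
  by rewrite add0r -/S0 (S0cst (cst_mul (cst_exp _ hv) hq0)).
have q00 : q0 = 0.
  have : (t0 ^+ (n+1) * q0) *: S0 = 0 by rewrite -Pqb -H3 Pqa.
  move/(scalS0 S0nz)/eqP; rewrite mulf_eq0 expf_eq0 (negbTE t0n) andbF /=; exact/eqP.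
subst q0.
have [fu [fb ef2]] := cst0 hq0.
set w := f1 + Mo 0 1 * fu.
have cstY z : cst (Mo 0 1 * z) 0.
  by exists 0, z; rewrite scale0r add0r mulr0 add0r -MoY.
have hw : cst w p0 by rewrite /w -[p0]addr0; apply: cst_add.
have ef3 : f = Mo 1 0 * w + Mo 0 2 * fb.
  by rewrite ef ef2 /w M02 -MoX -MoY; ring.
have E1l : Mo 0 n * (f ^+ n * g ^+ 2) = (p0 ^+ n * t0 ^+ 2) *: S0.
  rewrite eg2 sq2 distr3 ef3.
  rewrite (@probe_oneE _ _ _ _ _ _ _ _ _ _ n (n+2)); try solve_side.
  rewrite probe_zero; try solve_side.
  rewrite probe_zero; try solve_side.
  by rewrite !addr0 soc1 (S0cst (cst_mul (cst_exp _ hw) (cst_exp _ hv))).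
have E1r : Mo 0 n * g ^+ (n+2) = t0 ^+ (n+2) *: S0.
  rewrite eg2 (@probe_oneE1 _ _ _ _ _ _ _ _ _ 0 (2*n+2)); try solve_side.
  by rewrite -/S0 (S0cst (cst_exp _ hv)).
have E1 : p0 ^+ n * t0 ^+ 2 = t0 ^+ (n+2).
  by apply: scal_eq; rewrite -E1l -E1r H2.
have p0n : p0 != 0.
  apply/negP => /eqP p00; move: E1; rewrite p00.
  have z0 : (0 : K) ^+ n = 0 by rewrite -(subnK (ltnW n2)) exprD expr1 mulr0.
  by rewrite z0 mul0r => /esym /eqP; rewrite expf_eq0 (negbTE t0n) andbF.
have [a0 ha0] := decomp ga.
have P2 : Mo (3*n-2) 2 = Mo (2*n-2) (n+2).
  transitivity (Mo (n + (2*n-2)) (2+0)); first by apply: Mo_eq; lia.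
  by rewrite MoR2; apply: Mo_eq; lia.
have PX : Mo (2*n-2) (n+2) * X = 0.
  by rewrite mulMoX; apply: stairP; rewrite /stair; lia.
have PY : Mo (2*n-2) (n+2) * Y = 0.
  by rewrite mulMoY; apply: stairP; rewrite /stair; lia.
have Pal : Mo (2*n-2) 0 * (f ^+ n * g ^+ 2) =
    (p0 ^+ n * t0 ^+ 2) *: Mo (2*n-2) (n+2) + (p0 ^+ n * (t0 * a0 *+ 2)) *: S0.
  rewrite eg2 sq2 distr3 ef3.
  rewrite (@probe_oneE _ _ _ _ _ _ _ _ _ _ (3*n-2) 2); try solve_side.
  rewrite (@probe_oneE _ _ _ _ _ _ _ _ _ _ (3*n) 1); try solve_side.
  rewrite probe_zero; try solve_side.
  rewrite addr0 P2 soc2 (killsP PX PY (cst_mul (cst_exp _ hw) (cst_exp _ hv))).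
  by rewrite (S0cst (cst_mul (cst_exp _ hw) (cst_muln 2 (cst_mul hv ha0)))).
have Par : Mo (2*n-2) 0 * g ^+ (n+2) = t0 ^+ (n+2) *: Mo (2*n-2) (n+2).
  rewrite eg2 (@probe_oneE1 _ _ _ _ _ _ _ _ _ (2*n-2) (n+2)); try solve_side.
  by rewrite (killsP PX PY (cst_exp _ hv)).
have a00 : a0 = 0.
  have : (p0 ^+ n * (t0 * a0 *+ 2)) *: S0 = 0.
    by apply: (addrI ((p0 ^+ n * t0 ^+ 2) *: Mo (2*n-2) (n+2))); rewrite -Pal addr0 E1 -Par H2.
  move/(scalS0 S0nz)/eqP; rewrite -mulr_natr !mulf_eq0 expf_eq0 (negbTE p0n) (negbTE t0n) (negbTE h2) andbF /=.
  by rewrite orbF => /eqP.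
subst a0.
have [gc [gd eg3]] := cst0 ha0.
set v' := v + Mo 2 0 * gd.
have hv' : cst v' t0.
  rewrite /v' -[t0]addr0; apply: cst_add => //.
  by exists (Mo 1 0 * gd), 0; rewrite scale0r add0r mulr0 addr0 M20 -MoX mulrA.
have eg4 : g = Mo 0 1 * v' + Mo 3 0 * gc.
  by rewrite eg2 eg3 /v' M20 M30 -MoX -MoY; ring.
have E2l : Mo (n-1) 1 * f ^+ (2*n+1) = p0 ^+ (2*n+1) *: S0.
  rewrite ef3 (@probe_oneE1 _ _ _ _ _ _ _ _ _ (3*n) 1); try solve_side.
  by rewrite soc2 (S0cst (cst_exp _ hw)).
have E2r : Mo (n-1) 1 * (f * g ^+ (n+1)) = (t0 ^+ (n+1) * p0) *: S0.
  rewrite {1}ef3 distr2 eg4.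
  rewrite (@probe_oneE _ _ _ _ _ _ _ _ _ _ n (n+2)); try solve_side.
  rewrite probe_zero; try solve_side.
  by rewrite addr0 soc1 (S0cst (cst_mul (cst_exp _ hv') hw)).
have E2 : p0 ^+ (2*n+1) = t0 ^+ (n+1) * p0.
  by apply: scal_eq; rewrite -E2l -E2r H3.
have [wy jw] := jet_of hw.
have [vy jv] := jet_of hv'.
have E2b : Q * (w ^+ n * v' ^+ 2) = Q * v' ^+ (n+2).
  transitivity (Mo 0 (n-1) * (f ^+ n * g ^+ 2)).
    rewrite eg4 sq2 distr3 ef3.
    rewrite (@probe_oneE _ _ _ _ _ _ _ _ _ _ n (n+1)); try solve_side.
    rewrite probe_zero; try solve_side.
    rewrite probe_zero; try solve_side.
    by rewrite !addr0 Qsoc1.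
  rewrite H2 eg4 (@probe_oneE1 _ _ _ _ _ _ _ _ _ 0 (2*n+1)); try solve_side.
  by [].
have E3b : Q * w ^+ (2*n+1) = Q * (v' ^+ (n+1) * w).
  transitivity (Mo (n-1) 0 * f ^+ (2*n+1)).
    by rewrite ef3 (@probe_oneE1 _ _ _ _ _ _ _ _ _ (3*n) 0) ?Qsoc2 //; try solve_side.
  rewrite H3 {1}ef3 distr2 eg4.
  rewrite (@probe_oneE _ _ _ _ _ _ _ _ _ _ n (n+1)); try solve_side.
  rewrite probe_zero; try solve_side.
  by rewrite addr0 Qsoc1.
have Fin : g ^+ (2*n+1) = Q * v' ^+ (2*n+1).
  rewrite -[LHS]mul1r -Mo00 eg4 (@probe_oneE1 _ _ _ _ _ _ _ _ _ 0 (2*n+1)); try solve_side.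
  by [].
have J1 := jet_mul (jet_exp n jw) (jet_exp 2 jv).
have J2 := jet_exp (n+2) jv.
have J3 := jet_exp (2*n+1) jw.
have J4 := jet_mul (jet_exp (n+1) jv) jw.
have J5 := jet_exp (2*n+1) jv.
case: J1 => J1 _; case: J2 => J2 _; case: J3 => J3 _; case: J4 => J4 _; case: J5 => J5 _.
have D12 := E2b; rewrite J1 J2 E1 in D12; move/addrI/scal_eq in D12.
have D34 := E3b; rewrite J3 J4 E2 in D34; move/addrI/scal_eq in D34.
have [tn vy0] := @scal_final K n p0 t0 wy vy n2 hn hn1 t0n E1 E2 D12 D34.
exists t0; split => //.
by rewrite Fin J5 vy0 mul0r mul0rn scale0r addr0 /Q /Mo expr0 mul1r.
Qed.
End Core.

Section Poly.
Variable K : fieldType.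
Variable A : comAlgType K.
Variables X Y : A.

Let h := (fun i : 'I_2 => if i == ord0 then X else Y).

Lemma evalE p : evalXY X Y p = mmap (in_alg A) h p.
Proof. by []. Qed.

Lemma evalM p q : evalXY X Y (p * q) = evalXY X Y p * evalXY X Y q.
Proof. by rewrite !evalE rmorphM. Qed.

Lemma eval_X m : evalXY X Y 'X_[m] = X ^+ (m ord0) * Y ^+ (m ord_max).
Proof.
rewrite evalE mmapX /mmap1 big_ord_recl big_ord1 /h /=.
by have -> : lift ord0 (ord0 : 'I_1) = ord_max by apply: val_inj.
Qed.
End Poly.

Section L0.
Variable K : fieldType.
Variable n : nat.
Hypothesis n2 : (2 <= n)%N.

Definition mono (i j : nat) : 'X_{1..2} := (U_(ord0) *+ i + U_(ord_max) *+ j)%MM.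

Lemma mono0 i j : mono i j ord0 = i.
Proof. by rewrite /mono mnmDE !mulmnE !mnm1E /= mul1n mul0n addn0. Qed.
Lemma mono1 i j : mono i j ord_max = j.
Proof. by rewrite /mono mnmDE !mulmnE !mnm1E /= mul1n mul0n. Qed.

Lemma I2P (k : 'I_2) : k = ord0 \/ k = ord_max.
Proof. by case: k => [[|[|]]] // hk; [left|right]; apply: val_inj. Qed.

Lemma mono_ext (m1 m2 : 'X_{1..2}) : m1 ord0 = m2 ord0 -> m1 ord_max = m2 ord_max -> m1 = m2.
Proof. by move=> e0 e1; apply/mnmP => k; case: (I2P k) => ->. Qed.

Lemma monoE a b a' b' : a = a' -> b = b' -> mono a b = mono a' b'.
Proof. by move=> -> ->. Qed.

Lemma mono_eqb a b c d : (mono a b == mono c d) = (a == c) && (b == d).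
Proof.
apply/eqP/andP => [e|[/eqP -> /eqP ->] //].
by split; apply/eqP; [rewrite -(mono0 a b) -(mono0 c d) e | rewrite -(mono1 a b) -(mono1 c d) e].
Qed.

Lemma Xmono i j : (px K) ^+ i * (py K) ^+ j = 'X_[mono i j].
Proof. by rewrite /px /py !mpolyXn -mpolyXD. Qed.

Lemma coefMono (c : {mpoly K[2]}) i j a b :
  (c * 'X_[mono i j])@_(mono a b) =
  if (i <= a)%N && (j <= b)%N then c@_(mono (a - i) (b - j)) else 0.
Proof.
case: ifP => hij.
  have -> : mono a b = (mono i j + mono (a - i) (b - j))%MM.
    by apply: mono_ext; rewrite mnmDE ?mono0 ?mono1; lia.
  by rewrite mcoeffMX.
apply: memN_msupp_eq0; rewrite (perm_mem (msuppMX c (mono i j))).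
apply/mapP => [[m' _ e]]; move: hij.
have e0 := mono0 a b; have e1 := mono1 a b.
rewrite e mnmDE mono0 in e0; rewrite e mnmDE mono1 in e1; lia.
Qed.

Definition l0 (p : {mpoly K[2]}) :=
  p@_(mono 0 (2*n+2)) + p@_(mono n (n+2)) + p@_(mono (2*n) 2) + p@_(mono (3*n) 1).

Lemma l0D p q : l0 (p + q) = l0 p + l0 q.
Proof. rewrite /l0 !mcoeffD; ring. Qed.
Lemma l0N p : l0 (- p) = - l0 p.
Proof. rewrite /l0 !mcoeffN; ring. Qed.
Lemma l0B p q : l0 (p - q) = l0 p - l0 q.
Proof. rewrite /l0 !mcoeffB; ring. Qed.

Lemma l0_gen1 c : l0 (c * 'X_[mono 0 (2*n+3)]) = 0.
Proof.
rewrite /l0 !coefMono.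
have -> : ((0 <= 0)%N && (2 * n + 3 <= 2 * n + 2)%N) = false by lia.
have -> : ((0 <= n)%N && (2 * n + 3 <= n + 2)%N) = false by lia.
have -> : ((0 <= 2 * n)%N && (2 * n + 3 <= 2)%N) = false by lia.
have -> : ((0 <= 3 * n)%N && (2 * n + 3 <= 1)%N) = false by lia.
by rewrite !addr0.
Qed.

Lemma l0_gen2 c : l0 (c * 'X_[mono n 2]) = l0 (c * 'X_[mono 0 (n+2)]).
Proof.
rewrite /l0 !coefMono.
have -> : ((n <= 0)%N && (2 <= 2 * n + 2)%N) = false by lia.
have -> : ((n <= n)%N && (2 <= n + 2)%N) = true by lia.
have -> : ((n <= 2 * n)%N && (2 <= 2)%N) = true by lia.
have -> : ((n <= 3 * n)%N && (2 <= 1)%N) = false by lia.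
have -> : ((0 <= 0)%N && (n + 2 <= 2 * n + 2)%N) = true by lia.
have -> : ((0 <= n)%N && (n + 2 <= n + 2)%N) = true by lia.
have -> : ((0 <= 2 * n)%N && (n + 2 <= 2)%N) = false by lia.
have -> : ((0 <= 3 * n)%N && (n + 2 <= 1)%N) = false by lia.
rewrite (@monoE (n - n) (n + 2 - 2) 0 n) ?(@monoE (2 * n - n) (2 - 2) n 0); try lia.
rewrite (@monoE (0 - 0) (2 * n + 2 - (n + 2)) 0 n) ?(@monoE (n - 0) (n + 2 - (n + 2)) n 0); try lia.
by rewrite !addr0 add0r.
Qed.

Lemma l0_gen3 c : l0 (c * 'X_[mono (2*n+1) 0]) = l0 (c * 'X_[mono 1 (n+1)]).
Proof.
rewrite /l0 !coefMono.
have -> : ((2*n+1 <= 0)%N && (0 <= 2 * n + 2)%N) = false by lia.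
have -> : ((2*n+1 <= n)%N && (0 <= n + 2)%N) = false by lia.
have -> : ((2*n+1 <= 2 * n)%N && (0 <= 2)%N) = false by lia.
have -> : ((2*n+1 <= 3 * n)%N && (0 <= 1)%N) = true by lia.
have -> : ((1 <= 0)%N && (n + 1 <= 2 * n + 2)%N) = false by lia.
have -> : ((1 <= n)%N && (n + 1 <= n + 2)%N) = true by lia.
have -> : ((1 <= 2 * n)%N && (n + 1 <= 2)%N) = false by lia.
have -> : ((1 <= 3 * n)%N && (n + 1 <= 1)%N) = false by lia.
rewrite (@monoE (3 * n - (2 * n + 1)) (1 - 0) (n - 1) 1); try lia.
rewrite (@monoE (n - 1) (n + 2 - (n + 1)) (n - 1) 1); try lia.
by rewrite !add0r !addr0.
Qed.

Lemma l0_yy : l0 'X_[mono 0 (2*n+2)] = 1.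
Proof.
rewrite /l0 !mcoeffX !mono_eqb.
have -> : (0 == n)%N = false by lia.
have -> : (0 == 2 * n)%N = false by lia.
have -> : (0 == 3 * n)%N = false by lia.
by rewrite !eqxx /= !addr0.
Qed.

Lemma pyE j : (py K) ^+ j = 'X_[mono 0 j].
Proof. by rewrite -Xmono expr0 mul1r. Qed.
Lemma pxE i : (px K) ^+ i = 'X_[mono i 0].
Proof. by rewrite -Xmono expr0 mulr1. Qed.
Lemma gen1E : gen1 K n = 'X_[mono 0 (2*n+3)].
Proof. by rewrite /gen1 pyE. Qed.
Lemma gen2E : gen2 K n = 'X_[mono n 2] - 'X_[mono 0 (n+2)].
Proof. by rewrite /gen2 Xmono pyE. Qed.
Lemma gen3E : gen3 K n = 'X_[mono (2*n+1) 0] - 'X_[mono 1 (n+1)].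
Proof. by rewrite /gen3 pxE -(expr1 (px K)) Xmono. Qed.

Lemma l0_notin : ~ in_In n ((py K) ^+ (2*n+2)).
Proof.
move=> [c1 [c2 [c3 e]]].
have := congr1 l0 e.
rewrite pyE l0_yy gen1E gen2E gen3E.
rewrite !mulrBr !l0D !l0N l0_gen1 l0_gen2 l0_gen3 !subrr add0r addr0.
by move/eqP; rewrite oner_eq0.
Qed.
End L0.

Lemma decomp_all (K : fieldType) (A : comAlgType K) (X Y : A) :
  (forall a : A, exists p, a = evalXY X Y p) -> forall z : A, exists c, cst K A X Y z c.
Proof.
move=> surj z; have [p ->] := surj z.
have cX : cst K A X Y X 0 by exists 1, 0; rewrite scale0r add0r mulr1 mulr0 addr0.
have cY : cst K A X Y Y 0 by exists 0, 1; rewrite scale0r add0r mulr1 mulr0 add0r.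
have cC c : cst K A X Y c%:A c by exists 0, 0; rewrite !mulr0 !addr0.
elim/mpolyind: p => [|c m p _ _ [c0 IH]].
  by exists 0; exists 0, 0; rewrite /evalXY raddf0 scale0r !mulr0 !addr0.
exists (c * (0 ^+ m ord0 * 0 ^+ m ord_max) + c0).
rewrite /evalXY raddfD /= mmapZ -/(evalXY X Y 'X_[m]) eval_X.
apply: cst_add => //; apply: (cst_mul K A X Y (cC c)); apply: cst_mul; exact: cst_exp.
Qed.

Lemma char_ok (K : fieldType) m :
  (0 < m)%N -> (forall p, prime p -> p \in [pchar K] -> ~~ (p %| m)%N) -> m%:R != 0 :> K.
Proof.
move=> m0 h; rewrite natf_neq0_pchar; apply/pnatP => // p pp pm.
by rewrite !inE; apply/negP => /(h p pp); rewrite pm.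
Qed.

Theorem theorem1p1 (K : fieldType) (n : nat) :
  (2 <= n)%N ->
  ([pchar K] =i pred0 \/
   (forall p : nat, p \in [pchar K] -> coprime p n /\ coprime p n.-1)) ->
  forall (A : comAlgType K) (X Y : A),
  presents_An n X Y ->
  forall a : {lrmorphism A -> A}, bijective a ->
  exists gamma : K,
    a (Y ^+ (2 * n + 1)) = gamma *: Y ^+ (2 * n + 1) /\
    (if (n %% 3 == 1)%N then gamma ^+ ((n - 1) %/ 3) = 1
     else gamma ^+ (n - 1) = 1).
Proof.
move=> n2 hch A X Y [surj ker] a ha.
have evM p q : evalXY X Y (p * q) = evalXY X Y p * evalXY X Y q by apply: evalM.
have evXn p k : evalXY X Y (p ^+ k) = evalXY X Y p ^+ k by rewrite /evalXY rmorphXn.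
have evB p q : evalXY X Y (p - q) = evalXY X Y p - evalXY X Y q by rewrite /evalXY raddfB.
have evx : evalXY X Y (px K) = X by rewrite /px eval_X !mnm1E /= expr1 expr0 mulr1.
have evy : evalXY X Y (py K) = Y by rewrite /py eval_X !mnm1E /= expr1 expr0 mul1r.
have inG1 : in_In n (gen1 K n) by exists 1, 0, 0; rewrite mul1r !mul0r !addr0.
have inG2 : in_In n (gen2 K n) by exists 0, 1, 0; rewrite mul1r !mul0r addr0 add0r.
have inG3 : in_In n (gen3 K n) by exists 0, 0, 1; rewrite mul1r !mul0r !add0r.
have R1 : Y ^+ (2*n+3) = 0.
  by have := (ker _).2 inG1; rewrite /gen1 evXn evy.
have R2 : X ^+ n * Y ^+ 2 = Y ^+ (n+2).
  by have := (ker _).2 inG2; rewrite /gen2 evB evM !evXn evx evy => /eqP; rewrite subr_eq0 => /eqP.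
have R3 : X ^+ (2*n+1) = X * Y ^+ (n+1).
  by have := (ker _).2 inG3; rewrite /gen3 evB evM !evXn evx evy => /eqP; rewrite subr_eq0 => /eqP.
have dec := @decomp_all K A X Y surj.
have S0nz : S0 K n A X Y != 0.
  rewrite /S0 /Mo expr0 mul1r; apply/eqP => h0.
  apply: (@l0_notin K n n2); apply/(ker _).1.
  by rewrite evXn evy.
have hn : (n%:R : K) != 0.
  apply: char_ok; first lia.
  move=> p pp pc; case: hch => [h|h]; first by rewrite h in pc.
  have [cn _] := h p pc; apply/negP => pn.
  by move: cn; rewrite /coprime (gcdn_idPl pn) => /eqP p1; rewrite p1 in pp.
have hn1 : ((n - 1)%:R : K) != 0.
  apply: char_ok; first lia.
  move=> p pp pc; case: hch => [h|h]; first by rewrite h in pc.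
  have [_ cn] := h p pc; apply/negP => pn.
  by move: cn; rewrite -subn1 /coprime (gcdn_idPl pn) => /eqP p1; rewrite p1 in pp.
have h2 : (2%:R : K) != 0.
  apply: char_ok => // p pp pc; case: hch => [h|h]; first by rewrite h in pc.
  have [c1 c2] := h p pc; apply/negP => pn.
  have p2 : p = 2%N.
    by apply/eqP; rewrite eqn_leq dvdn_leq // (prime_gt1 pp).
  move: c1 c2; rewrite p2 !coprime2n; lia.
have Hg : a Y ^+ (2*n+3) = 0 by rewrite -rmorphXn R1 raddf0.
have H2 : a X ^+ n * a Y ^+ 2 = a Y ^+ (n+2) by rewrite -!rmorphXn -rmorphM R2.
have H3 : a X ^+ (2*n+1) = a X * a Y ^+ (n+1) by rewrite -!rmorphXn -rmorphM R3.
have Hgnz : a Y ^+ (2*n+2) != 0.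
  apply/eqP; rewrite -rmorphXn -(raddf0 a) => /(bij_inj ha) h0.
  by move: S0nz; rewrite /S0 /Mo expr0 mul1r h0 eqxx.
have [t [tn et]] := @main_core K n n2 A X Y R1 R2 R3 dec (a X) (a Y) Hg H2 H3 Hgnz S0nz hn hn1 h2.
exists (t ^+ (2*n+1)); split; first by rewrite rmorphXn et.
have e3 : t ^+ (2*n+1) = t ^+ 3.
  have -> : (2*n+1 = (n-1) + (n-1) + 3)%N by lia.
  by rewrite !exprD tn !mul1r.
rewrite e3; case: ifP => h3.
  rewrite -exprM.
  have -> : (3 * ((n - 1) %/ 3) = n - 1)%N by lia.
  exact: tn.
by rewrite -exprM mulnC exprM tn expr1n.
Qed.
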